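(* Let $\Delta=0$ be a passive orthonomic system as described in the context. For $j\in\{1,\dots,p\}$ consider the recursive schema \[ \mathfrak{D}_j=\frac{\partial}{\partial x_j}+\sum_{(k,L)\in\mathcal{S}_{e_j}}u^k_{L+e_j}\frac{\partial}{\partial u^k_L}+\sum_{(k,L)\in\mathcal{S}\setminus\mathcal{S}_{e_j}}\mathfrak{D}_M P^\alpha\,\frac{\partial}{\partial u^k_L}, \] where in the last sum, for $(k,L)\in\mathcal{S}\setminus\mathcal{S}_{e_j}$, $\alpha$ and $M$ are chosen with $(k,L+e_j)=(i^\alpha,J^\alpha+M)$, and $\mathfrak{D}_M=\mathfrak{D}_1^{M_1}\cdots\mathfrak{D}_p^{M_p}$ is evaluated by applying the same schema recursively. This recursive schema is well defined: for every $Q\in\mathcal{B}$ the evaluation of $\mathfrak{D}_jQ$ by the schema terminates.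
   Context: Jet space: coordinates $x_1,\dots,x_p$, $u^1,\dots,u^q$ and derivatives $u^j_K$, $K\in\mathbb{N}^p$ a multi-index; $e_i$ is the $i$-th unit multi-index. $\mathcal{A}$ is the ring of smooth functions of finitely many coordinates. Total derivatives $D_i=\partial/\partial x_i+\sum_{j,K}u^j_{K+e_i}\,\partial/\partial u^j_K$, $D_K=D_1^{K_1}\cdots D_p^{K_p}$. Choose $n$ pairs $(i^\alpha,J^\alpha)\in\{1,\dots,q\}\times\mathbb{N}^p$, $J^\alpha\neq0$. $u^j_K$ is principal if $(j,K)=(i^\alpha,J^\alpha+L)$ for some $\alpha,L$, otherwise parametric. $\mathcal{S}$ is the set of $(j,K)$ with $u^j_K$ parametric, and for $L\in\mathbb{N}^p$, $\mathcal{S}_L=\{(k,K):(k,K+L)\in\mathcal{S}\}$ (a subset of $\mathcal{S}$). $\mathcal{B}\subset\mathcal{A}$ consists of functions of the $x_i$ and parametric derivatives only. Fix a ranking $\le$: a total order on $\{1,\dots,q\}\times\mathbb{N}^p$ with $(j,K)\le(j,K+L)$ and $(i,J)\le(j,K)\iff(i,J+L)\le(j,K+L)$. The system is $u^{i^\alpha}_{J^\alpha}=P^\alpha$, $P^\alpha\in\mathcal{B}$, with $\Delta^\alpha=u^{i^\alpha}_{J^\alpha}-P^\alpha$; it is passive orthonomic if (i) $P^\alpha$ depends only on $u^j_K$ with $(j,K)<(i^\alpha,J^\alpha)$, and (ii) $(i^\alpha,J^\alpha+K)=(i^\beta,J^\beta+L)$ implies $D_KP^\alpha=D_LP^\beta$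 (modulo the system). Each $Q\in\mathcal{A}$ then has a unique reduced form $\widetilde{Q}\in\mathcal{B}$ congruent to $Q$ modulo the differential ideal generated by the $\Delta^\alpha$; the intrinsic operators are $\mathfrak{D}_KP=\widetilde{D_KP}$ for $P\in\mathcal{B}$, and the displayed schema is the formula these satisfy. *)

(* Defs.v *)
From HB Require Import structures.
From mathcomp Require Import all_boot all_order all_algebra.
From mathcomp Require Import boolp classical_sets reals topology normedtype derive.
Set Implicit Arguments. Unset Strict Implicit. Unset Printing Implicit Defensive.
Import Order.TTheory GRing.Theory Num.Theory numFieldNormedType.Exports.
Local Open Scope ring_scope.

(* u-coordinates u^j_K (j : 'I_q, K : N^p).  Indices are 0-based.      *)
Definition mi (p : nat) := {ffun 'I_p -> nat}.
Definition mi_add p (K L : mi p) : mi p := [ffun k => (K k + L k)%N].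
Definition mi_zero p : mi p := [ffun => 0%N].
Definition unit_mi p (i : 'I_p) : mi p := [ffun k => nat_of_bool (k == i)].

Definition jet_ucoord (p q : nat) := ('I_q * mi p)%type.
Definition jet_coord (p q : nat) := ('I_p + jet_ucoord p q)%type.
Definition Xc p q (i : 'I_p) : jet_coord p q := inl i.
Definition Uc p q (j : 'I_q) (K : mi p) : jet_coord p q := inr (j, K).

(* The list of indices realising D_M = D_1^{M_1} ... D_p^{M_p}:
   [1,...,1 (M_1 times), ..., p,...,p (M_p times)]; the head of the
   list is the outermost operator (applied last). *)
Definition mi_seq p (M : mi p) : seq 'I_p :=
  flatten [seq nseq (M i) i | i <- enum 'I_p].

Definition is_ranking p q (rle : jet_ucoord p q -> jet_ucoord p q -> Prop) : Prop :=
  (forall a, rle a a) /\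
  (forall a b, rle a b -> rle b a -> a = b) /\
  (forall a b c, rle a b -> rle b c -> rle a c) /\
  (forall a b, rle a b \/ rle b a) /\
  (forall j K L, rle (j, K) (j, mi_add K L)) /\
  (forall i J j K L, rle (i, J) (j, K) <-> rle (i, mi_add J L) (j, mi_add K L)).

Section Jet.
Variables (R : realType) (p q : nat).

Notation point := (jet_coord p q -> R).
Notation fn := (point -> R).

Definition upd (y : point) (c : jet_coord p q) (t : R) : point :=
  fun c' => if c' == c then t else y c'.

Definition pd (c : jet_coord p q) (f : fn) : fn :=
  fun y => derive1 (fun t => f (upd y c t)) (y c).

Definition iter_pd (cs : seq (jet_coord p q)) (f : fn) : fn := foldr pd f cs.

Definition depends_only (f : fn) (F : seq (jet_coord p q)) : Prop :=
  forall y y' : point, (forall c, c \in F -> y c = y' c) -> f y = f y'.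

Definition cont_on (F : seq (jet_coord p q)) (f : fn) : Prop :=
  forall (y : point) (e : R), 0 < e -> exists d : R, 0 < d /\
    forall y' : point, (forall c, c \in F -> `|y' c - y c| < d) ->
      `|f y' - f y| < e.

Definition smooth_on (F : seq (jet_coord p q)) (f : fn) : Prop :=
  forall cs : seq (jet_coord p q),
    (forall c (y : point), derivable (fun t => iter_pd cs f (upd y c t)) (y c) 1)
    /\ cont_on F (iter_pd cs f).

Definition inA (f : fn) : Prop :=
  exists F, depends_only f F /\ smooth_on F f.

Variables (n : nat) (ia : 'I_n -> 'I_q) (Ja : 'I_n -> mi p) (P : 'I_n -> fn).

Definition principal (a : jet_ucoord p q) : Prop :=
  exists (al : 'I_n) (L : mi p), a = (ia al, mi_add (Ja al) L).
Definition inS (a : jet_ucoord p q) : Prop := ~ principal a.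
Definition inS_shift (L : mi p) (a : jet_ucoord p q) : Prop :=
  inS (a.1, mi_add a.2 L).

Definition x_or_param (c : jet_coord p q) : Prop :=
  match c with inl _ => True | inr a => inS a end.

Definition inB (f : fn) : Prop :=
  exists F, [/\ depends_only f F, smooth_on F f & forall c, c \in F -> x_or_param c].

Definition Delta (al : 'I_n) : fn := fun y => y (Uc (ia al) (Ja al)) - P al y.

Definition td_term (i : 'I_p) (f : fn) (y : point) (c : jet_coord p q) : R :=
  match c with
  | inl _ => 0
  | inr (j, K) => y (Uc j (mi_add K (unit_mi i))) * pd c f y
  end.

(* TD i f g : g = D_i f  (F is any duplicate-free list of coordinates
   on which f depends; the result does not depend on that choice) *)
Definition TD (i : 'I_p) (f g : fn) : Prop :=
  exists F, [/\ uniq F, depends_only f F &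
    g = (fun y => pd (@Xc p q i) f y + \sum_(c <- F) td_term i f y c)].

Inductive TDseq : seq 'I_p -> fn -> fn -> Prop :=
| TDseq0 f : TDseq [::] f f
| TDseqS i s f f' g : TDseq s f f' -> TD i f' g -> TDseq (i :: s) f g.

Definition TDK (K : mi p) (f g : fn) : Prop := TDseq (mi_seq K) f g.

Definition diff_ideal (I : fn -> Prop) : Prop :=
  [/\ (forall f, I f -> inA f),
      I (fun _ => 0),
      (forall f g, I f -> I g -> I (fun y => f y + g y)),
      (forall a f, inA a -> I f -> I (fun y => a y * f y)) &
      (forall i f g, I f -> TD i f g -> I g)].

Definition in_gen_ideal (f : fn) : Prop :=
  forall I, diff_ideal I -> (forall al, I (Delta al)) -> I f.

Variable rle : jet_ucoord p q -> jet_ucoord p q -> Prop.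
Definition rlt (a b : jet_ucoord p q) : Prop := rle a b /\ a <> b.

Definition orthonomic_i : Prop :=
  forall al, exists F, depends_only (P al) F /\
    forall c, c \in F -> match c with
                         | inl _ => True
                         | inr a => rlt a (ia al, Ja al)
                         end.

Definition passive_ii : Prop :=
  forall (al be : 'I_n) (K L : mi p),
    (ia al, mi_add (Ja al) K) = (ia be, mi_add (Ja be) L) ->
    exists g1 g2, [/\ TDK K (P al) g1, TDK L (P be) g2 &
                      in_gen_ideal (fun y => g1 y - g2 y)].

(* (k,L) in S and the term with d/du^k_L actually occurs in frak{D}_j Q,
   i.e. dQ/du^k_L is not identically zero *)
Definition occurs (Q : fn) (c : jet_coord p q) : Prop :=
  match c with
  | inl _ => False
  | inr a => inS a /\ exists y, pd c Q y <> 0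
  end.

Definition schema_term (j : 'I_p) (g : jet_coord p q -> fn) (Q : fn) (y : point)
    (c : jet_coord p q) : R :=
  match c with
  | inl _ => 0
  | inr (k, L) =>
      (if `[< inS_shift (unit_mi j) (k, L) >]
       then y (Uc k (mi_add L (unit_mi j))) else g c y) * pd c Q y
  end.

(* Eval j Q Rs : some run of the schema computing frak{D}_j Q terminates
   with value Rs;  EvalSeq s Q Rs : same for frak{D}_{s_1}(...frak{D}_{s_m} Q) *)
Inductive Eval : 'I_p -> fn -> fn -> Prop :=
| EvalI (j : 'I_p) (Q Rs : fn) (F : seq (jet_coord p q)) (g : jet_coord p q -> fn) :
    uniq F ->
    (forall c, c \in F <-> occurs Q c) ->
    (forall k L, Uc k L \in F -> ~ inS_shift (unit_mi j) (k, L) ->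
       exists al M, (k, mi_add L (unit_mi j)) = (ia al, mi_add (Ja al) M) /\
                    EvalSeq (mi_seq M) (P al) (g (Uc k L))) ->
    Rs = (fun y => pd (@Xc p q j) Q y + \sum_(c <- F) schema_term j g Q y c) ->
    Eval j Q Rs
with EvalSeq : seq 'I_p -> fn -> fn -> Prop :=
| EvalSeq0 Q : EvalSeq [::] Q Q
| EvalSeqS i s Q Q' Rs : EvalSeq s Q Q' -> Eval i Q' Rs -> EvalSeq (i :: s) Q Rs.

(* Term j Q : the evaluation of frak{D}_j Q by the schema terminates,
   whatever choices of alpha and M are made along the way (well-founded
   tree of recursive calls). *)
Inductive Term : 'I_p -> fn -> Prop :=
| TermI (j : 'I_p) (Q : fn) :
    (forall k L al M, occurs Q (Uc k L) -> ~ inS_shift (unit_mi j) (k, L) ->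
       (k, mi_add L (unit_mi j)) = (ia al, mi_add (Ja al) M) ->
       TermSeq (mi_seq M) (P al)) ->
    Term j Q
with TermSeq : seq 'I_p -> fn -> Prop :=
| TermSeq0 Q : TermSeq [::] Q
| TermSeqS i s Q : TermSeq s Q -> (forall Q', EvalSeq s Q Q' -> Term i Q') ->
    TermSeq (i :: s) Q.

End Jet.

(* Main.v *)
Require Import Defs.
From HB Require Import structures.
From mathcomp Require Import all_boot all_order all_algebra.
From mathcomp Require Import boolp classical_sets reals topology normedtype derive.
From mathcomp Require Import zify.
Set Implicit Arguments. Unset Strict Implicit. Unset Printing Implicit Defensive.

Lemma ex_min_nat (P0 : nat -> Prop) (g : nat -> nat) :
  (exists n, P0 n) -> exists n, P0 n /\ forall n', P0 n' -> (g n <= g n')%N.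
Proof.
move=> [n0 Hn0].
suff H : forall b n, P0 n -> (g n <= b)%N ->
  exists n, P0 n /\ forall n', P0 n' -> (g n <= g n')%N by exact: (H _ n0 Hn0 (leqnn _)).
elim=> [|b IH] n Pn gn.
  by exists n; split => // n' _; move: gn; rewrite leqn0 => /eqP ->.
case: (EM (exists n', P0 n' /\ (g n' <= b)%N)) => [[n' [Pn' gn']]|nH].
  exact: IH Pn' gn'.
exists n; split => // n' Pn'; apply: (leq_trans gn); rewrite ltnNge; apply/negP => H.
by apply: nH; exists n'.
Qed.

Lemma step_le (u : nat -> nat) : (forall k, (u k <= u k.+1)%N) ->
  forall a d, (u a <= u (a + d))%N.
Proof. move=> H a; elim=> [|d IH]; first by rewrite addn0. by rewrite addnS (leq_trans IH). Qed.

Lemma step_lt (u : nat -> nat) : (forall k, (u k < u k.+1)%N) ->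
  forall a b, (a < b)%N -> (u a < u b)%N.
Proof.
move=> H a b ab; rewrite -(subnKC ab).
elim: (b - a.+1)%N => [|d IH]; first by rewrite addn0 H.
by rewrite addnS (ltn_trans IH).
Qed.

Lemma extract (g : nat -> nat) : exists psi : nat -> nat,
  (forall k, (psi k < psi k.+1)%N) /\ forall k, (g (psi k) <= g (psi k.+1))%N.
Proof.
have H : forall m, exists n, (m < n)%N /\ forall n', (m < n')%N -> (g n <= g n')%N.
  by move=> m; exact: (@ex_min_nat (fun n => is_true (m < n)%N) g (ex_intro _ m.+1 (ltnSn m))).
case: (choice H) => nxt Hn.
exists (fun k => iter k.+1 nxt 0%N); split => k.
  by rewrite [iter k.+2 _ _]/= ; case: (Hn (iter k.+1 nxt 0%N)).
rewrite [iter k.+2 _ _]/=; rewrite [iter k.+1 _ _]/=.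
case: (Hn (iter k nxt 0%N)) => _ H2; apply: H2.
case: (Hn (nxt (iter k nxt 0%N))) => H3 _.
by apply: ltn_trans H3; case: (Hn (iter k nxt 0%N)).
Qed.

Lemma extract_multi (X : Type) (hs : nat -> X -> nat) (f : nat -> X) (N : nat) :
  exists phi : nat -> nat, (forall k, (phi k < phi k.+1)%N) /\
    forall m, (m < N)%N -> forall k, (hs m (f (phi k)) <= hs m (f (phi k.+1)))%N.
Proof.
elim: N => [|N [phi [Hphi Hm]]].
  by exists id; split.
case: (extract (fun k => hs N (f (phi k)))) => psi [Hpsi Hg].
exists (fun k => phi (psi k)); split => [k|m mN k].
  exact: step_lt.
rewrite ltnS leq_eqVlt in mN; case/orP: mN => [/eqP->|mN]; first exact: Hg.
have := step_le (Hm m mN) (psi k) (psi k.+1 - psi k).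
by rewrite subnKC // ltnW.
Qed.

Lemma rlt_trans (p q : nat) (rle : jet_ucoord p q -> jet_ucoord p q -> Prop) :
  is_ranking rle -> forall a b c, rlt rle a b -> rlt rle b c -> rlt rle a c.
Proof.
move=> [r1 [r2 [r3 _]]] a b c [ab nab] [bc nbc]; split; first exact: r3 ab bc.
by move=> E; subst c; apply: nab; apply: r2.
Qed.

Definition hsU (p q : nat) (m : nat) (a : jet_ucoord p q) : nat :=
  match m with
  | 0 => nat_of_ord a.1
  | 1 => (q - nat_of_ord a.1)%N
  | m'.+2 => if @insub nat (fun x => (x < p)%N) 'I_p m' is Some i then a.2 i else 0%N
  end.

Lemma rlt_wf (p q : nat) (rle : jet_ucoord p q -> jet_ucoord p q -> Prop) :
  is_ranking rle -> well_founded (rlt rle).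
Proof.
move=> Hr; have Hr' := Hr; move: Hr' => [r1 [r2 [r3 [r4 [r5 r6]]]]].
move=> a; apply: contrapT => nacc.
pose T := {b : jet_ucoord p q | ~ Acc (rlt rle) b}.
have step : forall x : T, exists y : T, rlt rle (sval y) (sval x).
  move=> [b nb]; apply: contrapT => H; apply: (nb); constructor => b' Hb'.
  apply: contrapT => nb'; apply: H; by exists (exist _ b' nb').
case: (choice step) => nxt Hnxt.
pose s k := sval (iter k nxt (exist _ a nacc)).
have desc : forall i d, rlt rle (s (i + d.+1)%N) (s i).
  move=> i; elim=> [|d IH]; first by rewrite addn1 /s /= ; apply: Hnxt.
  apply: (@rlt_trans _ _ _ Hr _ _ _ _ IH); rewrite addnS /s /=; apply: Hnxt.
case: (extract_multi (@hsU p q) s p.+2) => phi [Hphi Hm].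
have d01 := desc (phi 0%N) (phi 1%N - (phi 0%N).+1)%N.
rewrite -addSnnS subnKC in d01; last exact: Hphi.
set a0 := s (phi 0%N) in d01 Hm *; set a1 := s (phi 1%N) in d01 Hm *.
have H0 := Hm 0%N isT 0%N; have H1 := Hm 1%N isT 0%N.
rewrite /= -/a0 -/a1 in H0 H1.
have Ej : a0.1 = a1.1.
  apply: val_inj; have := ltn_ord a0.1; have := ltn_ord a1.1; move: H0 H1.
  rewrite /=. move: (nat_of_ord a0.1) (nat_of_ord a1.1) => x y. lia.
have HK : forall i : 'I_p, (a0.2 i <= a1.2 i)%N.
  move=> i; have := Hm (i.+2) (ltn_ord i) 0%N; rewrite /= -/a0 -/a1.
  by rewrite (valK i).
have E1 : a1 = (a0.1, mi_add a0.2 [ffun i => (a1.2 i - a0.2 i)%N]).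
  clear H0 H1 Hm; move: Ej HK; rewrite /a1; case: (s (phi 1%N)) => j1 K1 /= <- HK; congr (_, _).
  by apply/ffunP => i; rewrite !ffunE subnKC.
case: d01 => le10 ne10.
have le01 : rle a0 a1 by rewrite E1; case: (a0) => ??; apply: r5.
by apply: ne10; apply: r2.
Qed.

Local Open Scope ring_scope.
Import GRing.Theory Num.Theory.

Definition dep (R : realType) (p q : nat) (f : (jet_coord p q -> R) -> R)
  (S : jet_coord p q -> Prop) : Prop :=
  forall y y' : jet_coord p q -> R, (forall c, S c -> y c = y' c) -> f y = f y'.

Lemma dep_mono (R : realType) (p q : nat) (f : (jet_coord p q -> R) -> R) S S' :
  dep f S -> (forall c, S c -> S' c) -> dep f S'.
Proof. by move=> H HS y y' E; apply: H => c /HS; apply: E. Qed.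

Lemma upd_agree (R : realType) (p q : nat) (S : jet_coord p q -> Prop)
  (y y' : jet_coord p q -> R) c t :
  (forall c', S c' -> c' <> c -> y c' = y' c') ->
  forall c', S c' -> upd y c t c' = upd y' c t c'.
Proof. by move=> H c' Sc'; rewrite /upd; case: eqP => // ne; apply: H. Qed.

Lemma pd_zero (R : realType) (p q : nat) (f : (jet_coord p q -> R) -> R) S c :
  dep f S -> ~ S c -> forall y, pd c f y = 0.
Proof.
move=> H nS y; rewrite /pd.
have -> : (fun t => f (upd y c t)) = (fun _ => f y).
  apply: funext => t; apply: H => c' Sc'; rewrite /upd; case: eqP => // E.
  by subst c'.
by have := @derive1_cst R R^o (f y) (y c).
Qed.

Lemma dep_pd (R : realType) (p q : nat) (f : (jet_coord p q -> R) -> R) S c :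
  dep f S -> dep (pd c f) S.
Proof.
move=> H y y' E; case: (EM (S c)) => Sc; last by rewrite !(pd_zero H Sc).
rewrite /pd (E c Sc).
have -> : (fun t => f (upd y c t)) = (fun t => f (upd y' c t)) => //.
apply: funext => t; apply: H; apply: upd_agree => c' Sc' _; exact: E.
Qed.

Lemma dep_add (R : realType) (p q : nat) (f g : (jet_coord p q -> R) -> R) S :
  dep f S -> dep g S -> dep (fun y => f y + g y) S.
Proof. by move=> Hf Hg y y' E; rewrite (Hf _ _ E) (Hg _ _ E). Qed.

Lemma dep_mul (R : realType) (p q : nat) (f g : (jet_coord p q -> R) -> R) S :
  dep f S -> dep g S -> dep (fun y => f y * g y) S.
Proof. by move=> Hf Hg y y' E; rewrite (Hf _ _ E) (Hg _ _ E). Qed.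

Lemma dep_coord (R : realType) (p q : nat) (S : jet_coord p q -> Prop) c :
  S c -> dep (fun y : jet_coord p q -> R => y c) S.
Proof. by move=> Sc y y' E; apply: E. Qed.

Lemma dep_cst (R : realType) (p q : nat) (S : jet_coord p q -> Prop) (r : R) :
  dep (fun y : jet_coord p q -> R => r) S.
Proof. by []. Qed.

Lemma dep_sum (R : realType) (p q : nat) (T : eqType) (l : seq T)
  (h : T -> (jet_coord p q -> R) -> R) S :
  (forall x, x \in l -> dep (h x) S) -> dep (fun y => \sum_(x <- l) h x y) S.
Proof.
elim: l => [|x l IH] H y y' E; first by rewrite !big_nil.
rewrite !big_cons (H x (mem_head _ _) _ _ E) (IH _ _ _ E) //.
by move=> z Hz; apply: H; rewrite in_cons Hz orbT.
Qed.

Definition fin (R : realType) (p q : nat) (f : (jet_coord p q -> R) -> R) : Prop :=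
  exists F : seq (jet_coord p q), dep f (fun c => c \in F).

Lemma fin_add (R : realType) (p q : nat) (f g : (jet_coord p q -> R) -> R) :
  fin f -> fin g -> fin (fun y => f y + g y).
Proof.
move=> [F1 H1] [F2 H2]; exists (F1 ++ F2); apply: dep_add.
  by apply: dep_mono H1 _ => c; rewrite mem_cat => ->.
by apply: dep_mono H2 _ => c; rewrite mem_cat orbC => ->.
Qed.

Lemma fin_mul (R : realType) (p q : nat) (f g : (jet_coord p q -> R) -> R) :
  fin f -> fin g -> fin (fun y => f y * g y).
Proof.
move=> [F1 H1] [F2 H2]; exists (F1 ++ F2); apply: dep_mul.
  by apply: dep_mono H1 _ => c; rewrite mem_cat => ->.
by apply: dep_mono H2 _ => c; rewrite mem_cat orbC => ->.
Qed.

Lemma fin_sum (R : realType) (p q : nat) (T : eqType) (l : seq T)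
  (h : T -> (jet_coord p q -> R) -> R) :
  (forall x, x \in l -> fin (h x)) -> fin (fun y => \sum_(x <- l) h x y).
Proof.
elim: l => [|x l IH] H.
  by exists [::] => y y' _; rewrite !big_nil.
have H' : forall z, z \in l -> fin (h z) by move=> z Hz; apply: H; rewrite in_cons Hz orbT.
have [F HF] := fin_add (H x (mem_head _ _)) (IH H').
exists F => y y' E; rewrite !big_cons; exact: HF.
Qed.

Definition sumseq (p : nat) (s : seq 'I_p) : mi p :=
  foldr (fun i K => mi_add K (unit_mi i)) (mi_zero p) s.

Lemma sumseqE (p : nat) (s : seq 'I_p) k : sumseq s k = count_mem k s.
Proof.
elim: s => [|i s IH] /=; first by rewrite ffunE.
by rewrite !ffunE IH addnC eq_sym.
Qed.

Lemma sumseq_mi_seq (p : nat) (M : mi p) : sumseq (mi_seq M) = M.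
Proof.
apply/ffunP => k; rewrite sumseqE /mi_seq count_flatten sumnE big_map big_map.
under eq_bigr => i _ do rewrite count_nseq.
rewrite big_enum /= (bigD1 k) //= eqxx mul1n big1 ?addn0 //.
by move=> i /negbTE; rewrite eq_sym => ->.
Qed.

Lemma mi_addA (p : nat) (A B C : mi p) :
  mi_add (mi_add A B) C = mi_add A (mi_add B C).
Proof. by apply/ffunP => k; rewrite !ffunE addnA. Qed.

Lemma mi_add_inj (p : nat) (A B L : mi p) : mi_add A L = mi_add B L -> A = B.
Proof.
move=> E; apply/ffunP => k; have := congr1 (fun K : mi p => K k) E.
by rewrite /= !ffunE => /addIn.
Qed.

Lemma mi_add_unit_ne (p : nat) (K : mi p) (i : 'I_p) : mi_add K (unit_mi i) <> K.
Proof.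
move=> E; have := congr1 (fun K : mi p => K i) E; rewrite /= !ffunE eqxx addn1.
by move=> /eqP; rewrite -{2}(addn0 (K i)) -addn1 eqn_add2l.
Qed.

Lemma rlt_step (p q : nat) (rle : jet_ucoord p q -> jet_ucoord p q -> Prop)
  (c : jet_ucoord p q) (i : 'I_p) :
  is_ranking rle -> rlt rle c (c.1, mi_add c.2 (unit_mi i)).
Proof.
move=> [_ [_ [_ [_ [r5 _]]]]]; split; first by case: c => ??; apply: r5.
by case: c => j K [] /esym; apply: mi_add_unit_ne.
Qed.

Lemma rlt_transl (p q : nat) (rle : jet_ucoord p q -> jet_ucoord p q -> Prop)
  (a b : jet_ucoord p q) (L : mi p) :
  is_ranking rle -> rlt rle a b -> rlt rle (a.1, mi_add a.2 L) (b.1, mi_add b.2 L).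
Proof.
move=> [_ [_ [_ [_ [_ r6]]]]]; case: a => i J; case: b => j K [ab nab]; split.
  exact: (proj1 (r6 i J j K L)).
by case=> E1 E2; apply: nab; rewrite E1 (mi_add_inj E2).
Qed.

Lemma rle_rlt_trans (p q : nat) (rle : jet_ucoord p q -> jet_ucoord p q -> Prop) a b c :
  is_ranking rle -> rle a b -> rlt rle b c -> rlt rle a c.
Proof.
move=> [r1 [r2 [r3 _]]] ab [bc nbc]; split; first exact: r3 ab bc.
by move=> E; subst c; apply: nbc; apply: r2.
Qed.

Lemma upper_bound (p q : nat) (rle : jet_ucoord p q -> jet_ucoord p q -> Prop)
  (u0 : jet_ucoord p q) (l : seq (jet_ucoord p q)) :
  is_ranking rle -> exists c, forall a, a \in l -> rle a c.
Proof.
move=> [r1 [r2 [r3 [r4 _]]]]; elim: l => [|a l [c Hc]]; first by exists u0.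
case: (r4 a c) => H.
  by exists c => b; rewrite in_cons => /orP [/eqP ->|/Hc].
exists a => b; rewrite in_cons => /orP [/eqP ->|/Hc bc]; first exact: r1.
exact: r3 bc H.
Qed.

Definition bndP (p q : nat) (rle : jet_ucoord p q -> jet_ucoord p q -> Prop)
  (c : jet_ucoord p q) (c' : jet_coord p q) : Prop :=
  match c' with inl _ => True | inr a => rlt rle a c end.

Definition Good (R : realType) (p q n : nat) (ia : 'I_n -> 'I_q) (Ja : 'I_n -> mi p)
  (P : 'I_n -> (jet_coord p q -> R) -> R)
  (rle : jet_ucoord p q -> jet_ucoord p q -> Prop) (d : jet_ucoord p q) : Prop :=
  forall (j : 'I_p) (c : jet_ucoord p q) (Q : (jet_coord p q -> R) -> R),
    (c.1, mi_add c.2 (unit_mi j)) = d -> dep Q (bndP rle c) -> fin Q ->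
    Term ia Ja P j Q /\ (exists Rs, Eval ia Ja P j Q Rs) /\
    (forall Rs, Eval ia Ja P j Q Rs -> dep Rs (bndP rle d) /\ fin Rs).

Lemma mi_add0 (p : nat) (K : mi p) : mi_add K (mi_zero p) = K.
Proof. by apply/ffunP => k; rewrite !ffunE addn0. Qed.

Lemma bnd_mono (p q : nat) (rle : jet_ucoord p q -> jet_ucoord p q -> Prop) c d :
  is_ranking rle -> rle c d -> forall c', bndP rle c c' -> bndP rle d c'.
Proof.
move=> Hr cd [//|a] /= ac.
have [[r1 [r2 [r3 _]]]] := (Hr, Hr).
case: ac => ac nac; split; first exact: r3 ac cd.
move=> E; subst d; apply: nac; exact: r2.
Qed.

Lemma chain (R : realType) (p q n : nat) (ia : 'I_n -> 'I_q) (Ja : 'I_n -> mi p)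
  (P : 'I_n -> (jet_coord p q -> R) -> R)
  (rle : jet_ucoord p q -> jet_ucoord p q -> Prop) :
  is_ranking rle ->
  forall (s : seq 'I_p) (c0 : jet_ucoord p q) (Q0 : (jet_coord p q -> R) -> R),
  (forall d', rle d' (c0.1, mi_add c0.2 (sumseq s)) -> Good ia Ja P rle d') ->
  dep Q0 (bndP rle c0) -> fin Q0 ->
  TermSeq ia Ja P s Q0 /\ (exists Q', EvalSeq ia Ja P s Q0 Q') /\
  (forall Q', EvalSeq ia Ja P s Q0 Q' ->
     dep Q' (bndP rle (c0.1, mi_add c0.2 (sumseq s))) /\ fin Q').
Proof.
move=> Hr; have Hr' := Hr; move: Hr' => [r1 [r2 [r3 [r4 [r5 r6]]]]].
elim=> [|i s IH] c0 Q0 HG bQ fQ.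
  split; first by constructor.
  split; first by exists Q0; constructor.
  move=> Q' HE; inversion HE; subst.
  by rewrite /= mi_add0; case: (c0) bQ.
set C := (c0.1, mi_add c0.2 (sumseq s)).
have ET : (C.1, mi_add C.2 (unit_mi i)) = (c0.1, mi_add c0.2 (sumseq (i :: s))).
  by rewrite /C /= mi_addA.
have HG' : forall d', rle d' C -> Good ia Ja P rle d'.
  move=> d' Hd; apply: HG; apply: r3 Hd _; rewrite -ET /C /=; exact: r5.
have [T1 [[Q1 E1] B1]] := IH c0 Q0 HG' bQ fQ.
have G := HG _ (r1 _) i C.
split.
  constructor => // Q' HE; have [b f] := B1 _ HE.
  by have [] := G Q' ET b f.
split.
  have [b f] := B1 _ E1; have [_ [[Rs ERs] _]] := G Q1 ET b f.
  by exists Rs; econstructor; eauto.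
move=> Q' HE; inversion HE as [|i' s' Q0' Qm Rs' Hs He]; subst.
have [b f] := B1 _ Hs; have [_ [_ B]] := G Qm ET b f.
exact: B _ He.
Qed.

Lemma all_good (R : realType) (p q n : nat) (ia : 'I_n -> 'I_q) (Ja : 'I_n -> mi p)
  (P : 'I_n -> (jet_coord p q -> R) -> R)
  (rle : jet_ucoord p q -> jet_ucoord p q -> Prop) :
  is_ranking rle -> orthonomic_i ia Ja P rle -> forall d, Good ia Ja P rle d.
Proof.
move=> Hr Hort d; elim/(well_founded_induction (rlt_wf Hr)): d => d IHd.
move=> j c Q Ed bQ [F0 fQ].
have Hcd : rlt rle c d by rewrite -Ed; case: (c) => ??; apply: rlt_step.
have occ_lt : forall k L, occurs ia Ja Q (Uc k L) -> rlt rle (k, L) c.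
  move=> k L [_ [y Hy]]; apply: contrapT => nl; apply: Hy; exact: (pd_zero bQ).
have occ_F0 : forall c', occurs ia Ja Q c' -> c' \in F0.
  move=> [x []|a [_ [y Hy]]]; apply: contrapT => nl; apply: Hy; exact: (pd_zero fQ).
have call_ok : forall k L al M, rlt rle (k, L) c ->
    (k, mi_add L (unit_mi j)) = (ia al, mi_add (Ja al) M) ->
    TermSeq ia Ja P (mi_seq M) (P al) /\
    (exists Q', EvalSeq ia Ja P (mi_seq M) (P al) Q') /\
    (forall Q', EvalSeq ia Ja P (mi_seq M) (P al) Q' ->
       dep Q' (bndP rle (k, mi_add L (unit_mi j))) /\ fin Q').
  move=> k L al M kc E.
  have D : rlt rle (k, mi_add L (unit_mi j)) d.
    by rewrite -Ed; exact: (rlt_transl (unit_mi j) Hr kc).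
  have [Fa [dFa HFa]] := Hort al.
  have := @chain R p q n ia Ja P rle Hr (mi_seq M) (ia al, Ja al) (P al).
  rewrite /= sumseq_mi_seq -E; apply.
  - by move=> d' Hd'; apply: IHd; exact: rle_rlt_trans Hr Hd' D.
  - by apply: dep_mono dFa _ => c' /HFa; case: c'.
  - by exists Fa.
split.
  constructor => k L al M occ _ E; exact: (call_ok k L al M (occ_lt _ _ occ) E).1.
split.
  pose F := [seq c' <- undup F0 | `[< occurs ia Ja Q c' >]].
  have HF : forall c', c' \in F <-> occurs ia Ja Q c'.
    move=> c'; rewrite mem_filter mem_undup; split => [/andP [/asboolP]|H] //.
    by apply/andP; split; [exact/asboolP|exact: occ_F0].
  have Hg : forall c', exists gc, forall k L, c' = Uc k L -> occurs ia Ja Q c' ->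
      ~ inS_shift ia Ja (unit_mi j) (k, L) -> exists al M,
      (k, mi_add L (unit_mi j)) = (ia al, mi_add (Ja al) M) /\
      EvalSeq ia Ja P (mi_seq M) (P al) gc.
    move=> c'; case: (EM (exists k L, c' = Uc k L /\ occurs ia Ja Q c' /\
                               ~ inS_shift ia Ja (unit_mi j) (k, L))).
      move=> [k [L [Ec [oc ns]]]].
      have [al [M E]] : principal ia Ja (k, mi_add L (unit_mi j)) by apply: contrapT.
      have oc' : occurs ia Ja Q (Uc k L) by rewrite -Ec.
      have [_ [[Q' HQ'] _]] := call_ok k L al M (occ_lt k L oc') E.
      exists Q' => k' L' Ec' _ _; move: Ec'; rewrite Ec => -[<- <-].
      by exists al, M.
    move=> nH; exists Q => k L Ec oc ns; exfalso; apply: nH; by exists k, L.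
  have [g Hg'] := choice Hg.
  exists (fun y => pd (@Xc p q j) Q y + \sum_(c' <- F) schema_term ia Ja j g Q y c').
  apply: (@EvalI R p q n ia Ja P j Q _ F g).
  - by rewrite filter_uniq // undup_uniq.
  - exact: HF.
  - move=> k L inF ns; exact: Hg' k L erefl (proj1 (HF _) inF) ns.
  - by [].
move=> Rs HE; inversion HE as [j' Q' Rs' F g uF HF Hg ERs]; rewrite ERs.
have kd : forall k L, occurs ia Ja Q (Uc k L) -> rlt rle (k, mi_add L (unit_mi j)) d.
  by move=> k L oc; rewrite -Ed; exact: (rlt_transl (unit_mi j) Hr (occ_lt k L oc)).
split.
  apply: dep_add.
    by apply: dep_mono (dep_pd _ bQ) _; apply: bnd_mono (proj1 Hcd).
  apply: dep_sum => c' inF; have oc := proj1 (HF c') inF.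
  case: c' inF oc => [x|[k L]] inF oc /=; first exact: dep_cst.
  case: asboolP => ns.
    apply: dep_mul; first exact: dep_coord (kd k L oc).
    by apply: dep_mono (dep_pd _ bQ) _; apply: bnd_mono (proj1 Hcd).
  have [al [M [E HEs]]] := Hg k L inF ns.
  have [_ [_ B]] := call_ok k L al M (occ_lt k L oc) E.
  apply: dep_mul.
    by apply: dep_mono (B _ HEs).1 _; apply: bnd_mono (proj1 (kd k L oc)).
  by apply: dep_mono (dep_pd _ bQ) _; apply: bnd_mono (proj1 Hcd).
have fpd : forall c', fin (pd c' Q) by move=> c'; exists F0; exact: dep_pd.
apply: fin_add => //.
apply: fin_sum => c' inF; have oc := proj1 (HF c') inF.
case: c' inF oc => [x|[k L]] inF oc /=; first by exists [::].
case: asboolP => ns.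
  apply: fin_mul => //; exists [:: Uc k (mi_add L (unit_mi j))].
  by apply: dep_coord; rewrite mem_head.
have [al [M [E HEs]]] := Hg k L inF ns.
have [_ [_ B]] := call_ok k L al M (occ_lt k L oc) E.
by apply: fin_mul => //; exact: (B _ HEs).2.
Qed.

Theorem proposition2 (R : realType) (p q n : nat)
    (ia : 'I_n -> 'I_q) (Ja : 'I_n -> mi p)
    (P : 'I_n -> (jet_coord p q -> R) -> R)
    (rle : jet_ucoord p q -> jet_ucoord p q -> Prop) :
  (forall al, Ja al <> @mi_zero p) ->
  is_ranking rle ->
  (forall al, inB ia Ja (P al)) ->
  orthonomic_i ia Ja P rle ->
  passive_ii ia Ja P ->
  forall (j : 'I_p) (Q : (jet_coord p q -> R) -> R),
    inB ia Ja Q ->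
    Term ia Ja P j Q /\ exists Rs, Eval ia Ja P j Q Rs.
Proof.
move=> _ Hr _ Hort _ j Q [F [dQ _ _]].
case: (EM (exists u : jet_ucoord p q, True)) => [[u0 _]|nu].
  have [c Hc] := upper_bound u0
    [seq (match c' with inl _ => u0 | inr a => a end) | c' <- F] Hr.
  pose c1 := (c.1, mi_add c.2 (unit_mi j)).
  have bQ : dep Q (bndP rle c1).
    apply: (dep_mono dQ) => -[x|a] //= inF.
    apply: (rle_rlt_trans Hr); last by rewrite /c1; case: (c) => ??; apply: rlt_step.
    by apply: Hc; apply/mapP; exists (inr a).
  have [T [E _]] := @all_good R p q n ia Ja P rle Hr Hort _ j c1 Q erefl bQ
    (ex_intro _ F dQ).
  by split.
split.
  by constructor => k L *; exfalso; apply: nu; exists (k, L).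
exists (fun y => pd (@Xc p q j) Q y + \sum_(c' <- [::]) schema_term ia Ja j (fun _ => Q) Q y c').
apply: (@EvalI R p q n ia Ja P j Q _ [::] (fun _ => Q)) => //.
- move=> c'; split; first by rewrite in_nil.
  by case: c' => [x []|a _]; exfalso; apply: nu; exists a.
Qed.
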